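(* Let $H$ be a cocommutative Hopf algebra over a field of characteristic $0$ and $V$ a finite-dimensional $H$-module. Then $(K_i)_{i\ge0}$ is an algebra filtration of $H$, i.e. $K_i\subseteq K_{i+1}$ and $K_iK_j\subseteq K_{i+j}$ for all $i,j\ge0$.
   Context: Sweedler notation $\Delta h=h_{(1)}\otimes h_{(2)}$, counit $\varepsilon$; $h\triangleright v:=h\cdot v-\varepsilon(h)v$ for $h\in H,v\in V$. For $i\ge0$, $K'_i\subseteq H$ is the subspace of $h$ with $(h_{(1)}\triangleright v_1)\wedge\cdots\wedge(h_{(i+1)}\triangleright v_{i+1})=0$ in $\wedge^{i+1}V$ for all $v_1,\dots,v_{i+1}\in V$, and $K_i:=\Delta^{-1}(K'_i\otimes H)$. *)

(* Defs.v *)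
From HB Require Import structures.
From mathcomp Require Import all_boot all_order all_algebra.
Set Implicit Arguments. Unset Strict Implicit. Unset Printing Implicit Defensive.
Import GRing.Theory.
Local Open Scope ring_scope.

(* Tensors in H ⊗ H (resp. H ⊗ H ⊗ H) are represented by finite Sweedler
   sums  sum_p p.1 ⊗ p.2 , i.e. by  s : seq (H * H).  Two such sums denote
   the same tensor iff they agree under every bilinear (resp. trilinear)
   form, since (H⊗H)^* = bilinear forms separates points of H⊗H. *)

Section Hopf.
Variables (k : fieldType) (H : algType k).

Definition bilinear_form (b : H -> H -> k) : Prop :=
  (forall (c : k) (x y z : H), b (c *: x + y) z = c * b x z + b y z) /\
  (forall (c : k) (x y z : H), b z (c *: x + y) = c * b z x + b z y).

Definition trilinear_form (t : H -> H -> H -> k) : Prop :=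
  (forall (c : k) (x y u v : H), t (c *: x + y) u v = c * t x u v + t y u v) /\
  (forall (c : k) (x y u v : H), t u (c *: x + y) v = c * t u x v + t u y v) /\
  (forall (c : k) (x y u v : H), t u v (c *: x + y) = c * t u v x + t u v y).

Definition sw2 (s : seq (H * H)) (b : H -> H -> k) : k :=
  \sum_(p <- s) b p.1 p.2.

Definition teq2 (s t : seq (H * H)) : Prop :=
  forall b, bilinear_form b -> sw2 s b = sw2 t b.

Record is_hopf (D : H -> seq (H * H)) (eps : H -> k) (S : H -> H) : Prop := {
  eps_linear : forall (c : k) (x y : H), eps (c *: x + y) = c * eps x + eps y;
  eps_mul    : forall x y : H, eps (x * y) = eps x * eps y;
  eps_one    : eps 1 = 1;
  D_linear   : forall (c : k) (x y : H) b, bilinear_form b ->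
                 sw2 (D (c *: x + y)) b = c * sw2 (D x) b + sw2 (D y) b;
  D_mul      : forall x y : H, teq2 (D (x * y))
                 [seq (p.1 * q.1, p.2 * q.2) | p <- D x, q <- D y];
  D_one      : teq2 (D 1) [:: (1, 1)];
  D_coassoc  : forall (h : H) t, trilinear_form t ->
                 \sum_(p <- D h) \sum_(q <- D p.1) t q.1 q.2 p.2 =
                 \sum_(p <- D h) \sum_(q <- D p.2) t p.1 q.1 q.2;
  counit_l   : forall h : H, \sum_(p <- D h) eps p.1 *: p.2 = h;
  counit_r   : forall h : H, \sum_(p <- D h) eps p.2 *: p.1 = h;
  S_linear   : forall (c : k) (x y : H), S (c *: x + y) = c *: S x + S y;
  antipode_l : forall h : H, \sum_(p <- D h) S p.1 * p.2 = (eps h)%:A;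
  antipode_r : forall h : H, \sum_(p <- D h) p.1 * S p.2 = (eps h)%:A
}.

Definition cocommutative (D : H -> seq (H * H)) : Prop :=
  forall h : H, teq2 (D h) [seq (p.2, p.1) | p <- D h].

(* iterated coproduct: iterD n h = h_(1) ⊗ ... ⊗ h_(n+1) as a sum of
   lists of length n+1, computed as h_(1) ⊗ Δ^(n-1)(h_(2)) *)
Fixpoint iterD (D : H -> seq (H * H)) (n : nat) (h : H) : seq (seq H) :=
  match n with
  | 0 => [:: [:: h]]
  | n'.+1 => flatten [seq [seq p.1 :: t | t <- iterD D n' p.2] | p <- D h]
  end.

Section Module.
Variable (V : vectType k).

Record is_module (act : H -> V -> V) : Prop := {
  act_linear_l : forall (c : k) (x y : H) (v : V),
                   act (c *: x + y) v = c *: act x v + act y v;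
  act_linear_r : forall (c : k) (x : H) (v w : V),
                   act x (c *: v + w) = c *: act x v + act x w;
  act_one      : forall v : V, act 1 v = v;
  act_mul      : forall (x y : H) (v : V), act (x * y) v = act x (act y v)
}.

Variables (D : H -> seq (H * H)) (eps : H -> k) (act : H -> V -> V).

Definition tri (h : H) (v : V) : V := act h v - eps h *: v.

(* Pairing of w_1 ∧ ... ∧ w_n ∈ ∧^n V with f_1 ∧ ... ∧ f_n ∈ ∧^n V^*:
   det (f_j (w_i)).  This pairing is nondegenerate (V finite-dimensional),
   so an element of ∧^n V is zero iff all these pairings vanish. *)
Definition wedge_pair (n : nat) (w : 'I_n -> V) (f : 'I_n -> 'Hom(V, k^o)) : k :=
  \det (\matrix_(a < n, b < n) (f b (w a) : k)).

(* K'_i : sum_t (t_1 ▷ v_1) ∧ ... ∧ (t_{i+1} ▷ v_{i+1}) = 0 in ∧^{i+1} V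
   for all v_1, ..., v_{i+1} *)
Definition Kp (i : nat) (h : H) : Prop :=
  forall (v : 'I_i.+1 -> V) (f : 'I_i.+1 -> 'Hom(V, k^o)),
    \sum_(t <- iterD D i h)
       wedge_pair (fun a : 'I_i.+1 => tri (nth 0 t a) (v a)) f = 0.

(* K_i := Δ^{-1}(K'_i ⊗ H): Δ h is a sum of a ⊗ b with a ∈ K'_i *)
Definition K (i : nat) (h : H) : Prop :=
  exists s : seq (H * H), (forall p, p \in s -> Kp i p.1) /\ teq2 (D h) s.

End Module.
End Hopf.

(* Main.v *)
From Pilot Require Import Defs.
From HB Require Import structures.
From mathcomp Require Import all_boot all_order all_algebra.
From mathcomp Require Import boolp perm fingroup zify.
From Stdlib Require Import ProofIrrelevance FunctionalExtensionality Classical_Prop.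
Set Implicit Arguments. Unset Strict Implicit. Unset Printing Implicit Defensive.
Import GRing.Theory.
Local Open Scope ring_scope.
Notation iterD := Pilot.Defs.iterD.

Section DetIdeal.
Variables (R : comNzRingType) (Z : R -> Prop).
Hypotheses (Z0 : Z 0) (ZD : forall a b, Z a -> Z b -> Z (a + b))
  (ZM : forall a b, Z b -> Z (a * b)).

Lemma Z_sum I (r : seq I) (P : pred I) (F : I -> R) :
  (forall i, P i -> Z (F i)) -> Z (\sum_(i <- r | P i) F i).
Proof. by move=> h; apply: big_ind => //. Qed.

Lemma liftF n (h : 'I_n) i : (lift h i == h) = false.
Proof. by apply/negbTE; rewrite eq_sym neq_lift. Qed.

Lemma sum_lift n (P : 'I_n.+1 -> bool) r :
  (\sum_(a < n.+1) P a = P r + \sum_(a < n) P (lift r a))%N.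
Proof. by rewrite (bigD1_ord r). Qed.

Lemma Z_expand n (M : 'M[R]_n.+1) r :
  (forall b, Z (\det (row' r (col' b M)))) -> Z (\det M).
Proof.
move=> h; rewrite (expand_det_row M r); apply: Z_sum => b _.
by rewrite /cofactor; apply: ZM; apply: ZM.
Qed.

Lemma detB (A B : Type) (F : A -> B -> R) (m : nat) :
  (forall (w : 'I_m -> A) (f : 'I_m -> B), Z (\det (\matrix_(a, b) F (w a) (f b)))) ->
  forall n (M : 'M[R]_n) (P : 'I_n -> bool) (w : 'I_n -> A) (f : 'I_n -> B),
  (m <= \sum_(a < n) P a)%N -> (forall a b, P a -> M a b = F (w a) (f b)) -> Z (\det M).
Proof.
move=> base n; elim: n => [|n IH] M P w f hm hM.
  move: hm; rewrite big_ord0 leqn0 => /eqP m0; subst m.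
  by move: (base w f); rewrite !det_mx00.
have step (r : 'I_n.+1) : (m <= \sum_(a < n) P (lift r a))%N -> Z (\det M).
  move=> hr; apply: (@Z_expand n M r) => b.
  apply: (IH _ (fun a => P (lift r a)) (fun a => w (lift r a)) (fun c => f (lift b c))) => //.
  by move=> a c Pa; rewrite !mxE; apply: hM.
case: (pickP (fun a => ~~ P a)) => [r /= Pr | allP].
  by apply: (step r); move: hm; rewrite (sum_lift _ r) (negbTE Pr).
have allP' a : P a by move: (allP a) => /= /negbFE.
have sn : (\sum_(a < n) P (lift ord0 a) = n)%N.
  by rewrite (eq_bigr (fun _ => 1%N)) ?sum1_card ?card_ord // => a _; rewrite allP'.
case: (ltnP n m) => hnm.
  have em : m = n.+1.
    by apply/eqP; rewrite eqn_leq hnm andbT; move: hm; rewrite (sum_lift _ ord0) sn allP'.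
  subst m.
  have -> : M = \matrix_(a, b) F (w a) (f b) by apply/matrixP => a b; rewrite mxE hM.
  exact: base.
by apply: (step ord0); rewrite sn.
Qed.


Definition mkM (A B : Type) (FP FQ : A -> B -> R) n (kind : 'I_n -> option bool)
  (w : 'I_n -> A) (f : 'I_n -> B) : 'M[R]_n :=
  \matrix_(a, b) match kind a with
                 | Some true => FP (w a) (f b)
                 | Some false => FQ (w a) (f b)
                 | None => FP (w a) (f b) + FQ (w a) (f b) end.

Lemma detC (A B : Type) (FP FQ : A -> B -> R) (i j : nat) :
  (forall (w : 'I_i.+1 -> A) (f : 'I_i.+1 -> B), Z (\det (\matrix_(a, b) FP (w a) (f b)))) ->
  (forall (w : 'I_j.+1 -> A) (f : 'I_j.+1 -> B), Z (\det (\matrix_(a, b) FQ (w a) (f b)))) ->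
  forall n kind (w : 'I_n -> A) (f : 'I_n -> B), (i + j + 1 <= n)%N ->
  Z (\det (mkM FP FQ kind w f)).
Proof.
move=> bP bQ n kind w f hn.
move: {2}(\sum_(a < n) (kind a == None))%N (leqnn (\sum_(a < n) (kind a == None))%N) => c.
elim: c kind => [|c IH] kind hc.
  have hnone a : kind a != None.
    apply/negP => /eqP ka; move: hc; rewrite leqn0 => /eqP.
    by move/eqP; rewrite sum_nat_eq0 => /forallP /(_ a); rewrite ka.
  have hsum : (\sum_(a < n) (kind a == Some true) + \sum_(a < n) (kind a == Some false) = n)%N.
    rewrite -big_split /= (eq_bigr (fun _ => 1%N)) ?sum1_card ?card_ord // => a _.
    by move: (hnone a); case: (kind a) => [[]|].
  case: (leqP i.+1 (\sum_(a < n) (kind a == Some true))) => hP.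
    apply: (detB bP (P := fun a => kind a == Some true) (w := w) (f := f)) => // a b /eqP ka.
    by rewrite mxE ka.
  have hQ : (j.+1 <= \sum_(a < n) (kind a == Some false))%N.
    by move: hn hsum hP; rewrite addn1; lia.
  apply: (detB bQ (P := fun a => kind a == Some false) (w := w) (f := f)) => // a b /eqP ka.
  by rewrite mxE ka.
case: (pickP (fun a => kind a == None)) => [a0 /= /eqP ka0 | nonone]; last first.
  apply: IH; rewrite (eq_bigr (fun _ => 0%N)) ?big1 // => a _.
  by move: (nonone a) => /= ->.
destruct n as [|n]; first by move: a0 ka0 => [[]].
pose kd (o : bool) a := if a == a0 then Some o else kind a.
have hcnt o : (\sum_(a < n.+1) (kd o a == None) <= c)%N.
  have E : (\sum_(a < n) (kd o (lift a0 a) == None) =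
            \sum_(a < n) (kind (lift a0 a) == None))%N.
    by apply: eq_bigr => a _; rewrite /kd liftF.
  by move: hc; rewrite !(sum_lift _ a0) E /kd eqxx ka0 /= add0n add1n ltnS.
rewrite (@determinant_multilinear _ _ _ (mkM FP FQ (kd true) w f) (mkM FP FQ (kd false) w f) a0 1 1).
- by rewrite !mul1r; apply: ZD; apply: IH.
- by apply/rowP => b; rewrite !mxE /kd eqxx ka0 !mul1r.
- by apply/matrixP; move=> a b; rewrite !mxE /kd liftF.
- by apply/matrixP; move=> a b; rewrite !mxE /kd liftF.
Qed.

End DetIdeal.

Section ML.
Variables (k : fieldType) (U : vectType k).

Definition upd n (w : 'I_n -> U) (a : 'I_n) (x : U) : 'I_n -> U :=
  fun b => if b == a then x else w b.

Lemma ML n (G : ('I_n -> U) -> k) :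
  (forall w a c x y, G (upd w a (c *: x + y)) = c * G (upd w a x) + G (upd w a y)) ->
  (forall c : 'I_n -> 'I_(\dim (fullv : {vspace U})),
      G (fun a => (vbasis fullv)`_(c a)) = 0) ->
  forall w, G w = 0.
Proof.
move=> hlin hbase.
have G0 w a : G (upd w a 0) = 0.
  have := hlin w a 1 0 0; rewrite scale1r addr0 mul1r.
  by move/(congr1 (fun z => z - G (upd w a 0))); rewrite subrr addrK => <-.
have Gsum w a (r : seq 'I_(\dim (fullv : {vspace U}))) (cf : 'I_(\dim (fullv : {vspace U})) -> k) :
    G (upd w a (\sum_(j <- r) cf j *: (vbasis fullv)`_j)) =
    \sum_(j <- r) cf j * G (upd w a (vbasis fullv)`_j).
  elim: r => [|j r IH]; first by rewrite !big_nil G0.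
  by rewrite !big_cons hlin IH.
have key m : forall w, (forall a : 'I_n, (m <= a)%N ->
    exists j : 'I_(\dim (fullv : {vspace U})), w a = (vbasis fullv)`_j) -> G w = 0.
  elim: m => [|m IH] w hw.
    have [c hc] := @fin_all_exists _ (fun _ => 'I_(\dim (fullv : {vspace U})))
        (fun a j => w a = (vbasis fullv)`_j) (fun a => hw a (leq0n a)).
    have -> : w = (fun a => (vbasis fullv)`_(c a)).
      by apply: functional_extensionality => a; apply: hc.
    exact: hbase.
  case: (ltnP m n) => hmn; last first.
    apply: IH => a ha; exfalso; move: (ltn_ord a); rewrite ltnNge.
    by rewrite (leq_trans hmn ha).
  pose a0 := Ordinal hmn.
  have -> : w = upd w a0 (w a0).
    by apply: functional_extensionality => b; rewrite /upd; case: eqP => // ->.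
  rewrite (coord_vbasis (memvf (w a0))) Gsum big1 // => j _.
  rewrite IH ?mulr0 // => a ha; rewrite /upd; case: eqP => [_|/eqP hne].
    by exists j.
  apply: hw; rewrite ltn_neqAle ha andbT; apply: contra hne => /eqP e.
  by apply/eqP; apply: val_inj.
move=> w; apply: (key n) => a; by rewrite leqNgt ltn_ord.
Qed.

End ML.

Section Main.
Variables (k : fieldType) (H : algType k) (V : vectType k)
  (D : H -> seq (H * H)) (eps : H -> k) (S : H -> H) (act : H -> V -> V).
Hypothesis hH : is_hopf D eps S.
Hypothesis hC : cocommutative D.
Hypothesis hM : is_module act.

Definition lin (phi : H -> k) := forall c x y, phi (c *: x + y) = c * phi x + phi y.

Lemma lin0 phi : lin phi -> phi 0 = 0.
Proof. move=> L; have := L 1 0 0; rewrite scale1r addr0 mul1r.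
by move/(congr1 (fun z => z - phi 0)); rewrite subrr addrK => <-. Qed.

Lemma linD phi : lin phi -> forall x y, phi (x + y) = phi x + phi y.
Proof. by move=> L x y; have := L 1 x y; rewrite scale1r mul1r. Qed.

Lemma linZ phi : lin phi -> forall c x, phi (c *: x) = c * phi x.
Proof. by move=> L c x; rewrite -[c *: x]addr0 L lin0 // addr0. Qed.

Lemma linN phi : lin phi -> forall x, phi (- x) = - phi x.
Proof. by move=> L x; rewrite -scaleN1r linZ // mulN1r. Qed.

Lemma linB phi : lin phi -> forall x y, phi (x - y) = phi x - phi y.
Proof. by move=> L x y; rewrite linD // linN. Qed.

Lemma lin_sum phi I (r : seq I) (F : I -> H) : lin phi ->
  phi (\sum_(i <- r) F i) = \sum_(i <- r) phi (F i).
Proof.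
move=> L; elim: r => [|a r IH]; first by rewrite !big_nil lin0.
by rewrite !big_cons linD // IH.
Qed.

Lemma bilP (b : H -> H -> k) : bilinear_form b <->
  (forall z, lin (b ^~ z)) /\ (forall z, lin (b z)).
Proof.
split=> [[b1 b2]|[b1 b2]]; split.
- by move=> z c x y; apply: b1.
- by move=> z c x y; apply: b2.
- by move=> c x y z; apply: (b1 z).
- by move=> c x y z; apply: (b2 z).
Qed.

Record r2 := R2 { app :> H -> H -> k; app_bil : bilinear_form app }.

Lemma r2_ext (F G : r2) : (forall x y, F x y = G x y) -> F = G.
Proof.
case: F G => [f fb] [g gb] /= E.
have efg : f = g by apply: functional_extensionality => x; apply: functional_extensionality.
subst g; congr R2; apply: proof_irrelevance.
Qed.

HB.instance Definition _ := gen_eqMixin r2.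
HB.instance Definition _ := gen_choiceMixin r2.


Lemma lin_sumf I (r : seq I) (F : I -> H -> k) :
  (forall i, lin (F i)) -> lin (fun x => \sum_(i <- r) F i x).
Proof.
move=> L c x y; rewrite mulr_sumr -big_split /=; apply: eq_bigr => i _; exact: L.
Qed.

Lemma lin_mulr phi c0 : lin phi -> lin (fun x => phi x * c0).
Proof. by move=> L c x y /=; rewrite L mulrDl mulrA. Qed.

Lemma lin_mull c0 phi : lin phi -> lin (fun x => c0 * phi x).
Proof. by move=> L c x y /=; rewrite L mulrDr mulrCA. Qed.

Lemma r2l (F : r2) z : lin (fun x => F x z).
Proof. by case: F => f [b1 b2] c x y /=; apply: b1. Qed.

Lemma r2r (F : r2) z : lin (F z).
Proof. by case: F => f [b1 b2] c x y /=; apply: b2. Qed.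

Lemma mkbil (b : H -> H -> k) : (forall z, lin (b ^~ z)) -> (forall z, lin (b z)) ->
  bilinear_form b.
Proof. by move=> h1 h2; apply/bilP. Qed.

Ltac linauto := repeat first
  [ apply: lin_sumf => ? | apply: r2l | apply: r2r
  | apply: lin_mulr | apply: lin_mull ].

Lemma D_lin (t : H -> H -> k) : (forall b, lin (t ^~ b)) -> (forall a, lin (t a)) ->
  lin (fun x => \sum_(p <- D x) t p.1 p.2).
Proof.
move=> h1 h2 c x y; have := D_linear hH c x y (mkbil h1 h2); by rewrite /sw2.
Qed.

Lemma coassocL (h : H) (t : H -> H -> H -> k) :
  (forall b c, lin (fun a => t a b c)) -> (forall a c, lin (fun b => t a b c)) ->
  (forall a b, lin (fun c => t a b c)) ->
  \sum_(p <- D h) \sum_(q <- D p.1) t q.1 q.2 p.2 =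
  \sum_(p <- D h) \sum_(q <- D p.2) t p.1 q.1 q.2.
Proof.
move=> h1 h2 h3; apply: (D_coassoc hH); split; [|split].
- by move=> c x y u v; apply: h1.
- by move=> c x y u v; apply: h2.
- by move=> c x y u v; apply: h3.
Qed.

Lemma cocommL (h : H) (t : H -> H -> k) : (forall b, lin (t ^~ b)) -> (forall a, lin (t a)) ->
  \sum_(p <- D h) t p.1 p.2 = \sum_(p <- D h) t p.2 p.1.
Proof.
move=> h1 h2; have := hC h (mkbil h1 h2); rewrite /sw2 => ->; by rewrite big_map.
Qed.

Lemma counitL (h : H) phi : lin phi -> \sum_(p <- D h) eps p.1 * phi p.2 = phi h.
Proof. by move=> L; rewrite -[in RHS](counit_l hH h) lin_sum //; apply: eq_bigr => p _; rewrite linZ. Qed.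

Lemma counitR (h : H) phi : lin phi -> \sum_(p <- D h) eps p.2 * phi p.1 = phi h.
Proof. by move=> L; rewrite -[in RHS](counit_r hH h) lin_sum //; apply: eq_bigr => p _; rewrite linZ. Qed.

Lemma D_oneL (t : H -> H -> k) : (forall b, lin (t ^~ b)) -> (forall a, lin (t a)) ->
  \sum_(p <- D 1) t p.1 p.2 = t 1 1.
Proof. by move=> h1 h2; have := D_one hH (mkbil h1 h2); rewrite /sw2 big_seq1. Qed.

Lemma D_mulL x y (t : H -> H -> k) : (forall b, lin (t ^~ b)) -> (forall a, lin (t a)) ->
  \sum_(p <- D (x * y)) t p.1 p.2 =
  \sum_(p <- D x) \sum_(q <- D y) t (p.1 * q.1) (p.2 * q.2).
Proof. by move=> h1 h2; have := D_mul hH x y (mkbil h1 h2); rewrite /sw2 big_allpairs_dep. Qed.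

Lemma eps_lin : lin eps.
Proof. exact: (eps_linear hH). Qed.

Lemma lin_cst0 : lin (fun _ => 0).
Proof. by move=> c x y; rewrite mulr0 addr0. Qed.

Lemma lin_add phi psi : lin phi -> lin psi -> lin (fun x => phi x + psi x).
Proof. by move=> L1 L2 c x y; rewrite L1 L2 mulrDr addrACA. Qed.

Lemma lin_opp phi : lin phi -> lin (fun x => - phi x).
Proof. by move=> L c x y; rewrite L opprD mulrN. Qed.

Fact zero2_bil : bilinear_form (fun _ _ : H => (0 : k)).
Proof. by apply: mkbil => *; apply: lin_cst0. Qed.
Definition zero2 := R2 zero2_bil.

Fact add2_bil (F G : r2) : bilinear_form (fun x y => F x y + G x y).
Proof. by apply: mkbil => z; apply: lin_add; linauto. Qed.
Definition add2 F G := R2 (add2_bil F G).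

Fact opp2_bil (F : r2) : bilinear_form (fun x y => - F x y).
Proof. by apply: mkbil => z; apply: lin_opp; linauto. Qed.
Definition opp2 F := R2 (opp2_bil F).

Fact mul2_bil (F G : r2) : bilinear_form (fun x y =>
  \sum_(p <- D x) \sum_(q <- D y) F p.1 q.1 * G p.2 q.2).
Proof.
apply: mkbil => z.
- apply: (D_lin (t := fun a b => \sum_(q <- D z) F a q.1 * G b q.2)) => ?; linauto.
- have -> : (fun y => \sum_(p <- D z) \sum_(q <- D y) F p.1 q.1 * G p.2 q.2) =
            (fun y => \sum_(q <- D y) \sum_(p <- D z) F p.1 q.1 * G p.2 q.2).
    by apply: functional_extensionality => y; rewrite exchange_big.
  apply: (D_lin (t := fun a b => \sum_(p <- D z) F p.1 a * G p.2 b)) => ?; linauto.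
Qed.
Definition mul2 F G := R2 (mul2_bil F G).

Fact one2_bil : bilinear_form (fun x y => eps x * eps y).
Proof. apply: mkbil => z; [apply: lin_mulr | apply: lin_mull]; exact: eps_lin. Qed.
Definition one2 := R2 one2_bil.

Lemma add2A : associative add2.
Proof. by move=> F G K; apply: r2_ext => x y /=; rewrite addrA. Qed.
Lemma add2C : commutative add2.
Proof. by move=> F G; apply: r2_ext => x y /=; rewrite addrC. Qed.
Lemma add02 : left_id zero2 add2.
Proof. by move=> F; apply: r2_ext => x y /=; rewrite add0r. Qed.
Lemma addN2 : left_inverse zero2 opp2 add2.
Proof. by move=> F; apply: r2_ext => x y /=; rewrite addNr. Qed.

HB.instance Definition _ := GRing.isZmodule.Build r2 add2A add2C add02 addN2.


Lemma mul2C : commutative mul2.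
Proof.
move=> F G; apply: r2_ext => x y /=.
rewrite (cocommL x (t := fun a b => \sum_(q <- D y) F a q.1 * G b q.2)); last 2 first.
- by move=> ?; linauto.
- by move=> ?; linauto.
apply: eq_bigr => p _.
rewrite (cocommL y (t := fun a b => F p.2 a * G p.1 b)); last 2 first.
- by move=> ?; linauto.
- by move=> ?; linauto.
by apply: eq_bigr => q _; rewrite mulrC.
Qed.

Lemma mul12 : left_id one2 mul2.
Proof.
move=> F; apply: r2_ext => x y /=.
transitivity (\sum_(p <- D x) eps p.1 * F p.2 y); last first.
  by rewrite (counitL x (phi := fun a => F a y)) //; linauto.
apply: eq_bigr => p _.
rewrite -(counitL y (phi := fun c => eps p.1 * F p.2 c)); last by linauto.
by apply: eq_bigr => q _; rewrite mulrCA mulrA.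
Qed.

Lemma mul2Dl : left_distributive mul2 add2.
Proof.
move=> F G K; apply: r2_ext => x y /=; rewrite -big_split; apply: eq_bigr => p _.
rewrite -big_split; apply: eq_bigr => q _ /=; by rewrite mulrDl.
Qed.

Lemma one2_neq0 : one2 != zero2.
Proof.
apply/eqP => /(congr1 (fun F : r2 => app F 1 1)) /=.
by rewrite (eps_one hH) mulr1 => /eqP; rewrite oner_eq0.
Qed.

Lemma mul2A : associative mul2.
Proof.
move=> F G K; apply: r2_ext => x y /=; symmetry.
pose T a b c := \sum_(q <- D y) \sum_(q' <- D q.1) F a q'.1 * G b q'.2 * K c q.2.
transitivity (\sum_(p <- D x) \sum_(p' <- D p.2) T p.1 p'.1 p'.2).
  transitivity (\sum_(p <- D x) \sum_(p' <- D p.1) T p'.1 p'.2 p.2); last first.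
    apply: coassocL => *; rewrite /T; linauto.
  apply: eq_bigr => p _; rewrite /T exchange_big /=; apply: eq_bigr => q _.
  rewrite big_distrl /=; apply: eq_bigr => p' _; rewrite big_distrl /=.
  by apply: eq_bigr => q' _.
apply: eq_bigr => p _.
transitivity (\sum_(q <- D y) \sum_(p' <- D p.2) F p.1 q.1 *
   \sum_(q0 <- D q.2) G p'.1 q0.1 * K p'.2 q0.2); last first.
  by apply: eq_bigr => q _; rewrite big_distrr.
rewrite [RHS]exchange_big /=; apply: eq_bigr => p' _; rewrite /T.
rewrite (coassocL y (t := fun a b c => F p.1 a * G p'.1 b * K p'.2 c)); last 3 first.
- by move=> *; linauto.
- by move=> *; linauto.
- by move=> *; linauto.
apply: eq_bigr => q _; rewrite big_distrr /=; apply: eq_bigr => q' _; by rewrite mulrA.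
Qed.

HB.instance Definition _ := GRing.Zmodule_isComNzRing.Build r2 mul2A mul2C mul12 mul2Dl one2_neq0.

Lemma appD (F G : r2) x y : (F + G) x y = F x y + G x y. Proof. by []. Qed.
Lemma appN (F : r2) x y : (- F) x y = - F x y. Proof. by []. Qed.
Lemma app0 x y : (0 : r2) x y = 0. Proof. by []. Qed.
Lemma appM (F G : r2) x y : (F * G) x y =
  \sum_(p <- D x) \sum_(q <- D y) F p.1 q.1 * G p.2 q.2. Proof. by []. Qed.
Lemma app1 x y : (1 : r2) x y = eps x * eps y. Proof. by []. Qed.
Lemma app_sum I (r : seq I) P (F : I -> r2) x y :
  (\sum_(i <- r | P i) F i) x y = \sum_(i <- r | P i) F i x y.
Proof.
elim: r => [|a r IH]; first by rewrite !big_nil.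
by rewrite !big_cons; case: (P a); rewrite ?appD IH.
Qed.


Lemma iterDS n x : iterD D n.+1 x =
  flatten [seq [seq p.1 :: t | t <- iterD D n p.2] | p <- D x].
Proof. by []. Qed.

Lemma app_prod n (Psi : 'I_n.+1 -> r2) x y :
  (\prod_(a < n.+1) Psi a) x y = \sum_(s <- iterD D n x) \sum_(u <- iterD D n y)
     \prod_(a < n.+1) Psi a (nth 0 s a) (nth 0 u a).
Proof.
elim: n Psi x y => [|n IH] Psi x y.
  by rewrite /= !big_seq1 !big_ord1.
rewrite big_ord_recl appM iterDS big_flatten big_map /=.
apply: eq_bigr => p _; rewrite big_map.
transitivity (\sum_(q <- D y) \sum_(s <- iterD D n p.2) \sum_(u <- iterD D n q.2)
   Psi ord0 p.1 q.1 * \prod_(a < n.+1) Psi (lift ord0 a) (nth 0 s a) (nth 0 u a)).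
  apply: eq_bigr => q _; rewrite IH big_distrr /=; apply: eq_bigr => s _.
  by rewrite big_distrr.
rewrite exchange_big /=; apply: eq_bigr => s _.
rewrite big_allpairs_dep; apply: eq_bigr => q _.
apply: eq_bigr => u _; by rewrite [RHS]big_ord_recl.
Qed.

Lemma app_sign (b : bool) (F : r2) x y : ((-1) ^+ b * F) x y = (-1) ^+ b * F x y.
Proof.
case: b.
  have -> : ((-1) ^+ true * F = - F) by rewrite expr1 mulN1r.
  by rewrite appN expr1 mulN1r.
have -> : ((-1) ^+ false * F = F) by rewrite expr0 mul1r.
by rewrite expr0 mul1r.
Qed.

Lemma app_det n (M : 'M[r2]_n.+1) x y :
  (\det M) x y = \sum_(s <- iterD D n x) \sum_(u <- iterD D n y)
     \det (\matrix_(a, b) M a b (nth 0 s a) (nth 0 u a)).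
Proof.
rewrite /determinant app_sum.
transitivity (\sum_(s : 'S_(n.+1)) \sum_(t <- iterD D n x) \sum_(u <- iterD D n y)
   (-1) ^+ s * \prod_i M i (s i) (nth 0 t i) (nth 0 u i)).
  apply: eq_bigr => s _; rewrite app_sign app_prod big_distrr; apply: eq_bigr => t _.
  by rewrite big_distrr.
rewrite exchange_big /=; apply: eq_bigr => t _; rewrite exchange_big /=.
apply: eq_bigr => u _; apply: eq_bigr => s _; congr (_ * _).
by apply: eq_bigr => i _; rewrite mxE.
Qed.


Local Notation tr := (tri eps act).

Lemma tri_linh c x y v : tr (c *: x + y) v = c *: tr x v + tr y v.
Proof.
rewrite /tri (act_linear_l hM) (eps_linear hH) scalerDl -scalerA.
by rewrite scalerBr; rewrite addrACA opprD.
Qed.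

Lemma tri_linv c x v w : tr x (c *: v + w) = c *: tr x v + tr x w.
Proof.
by rewrite /tri (act_linear_r hM) scalerDr scalerA mulrC -scalerA scalerBr addrACA opprD.
Qed.

Lemma tri1 v : tr 1 v = 0.
Proof. by rewrite /tri (act_one hM) (eps_one hH) scale1r subrr. Qed.

Lemma tri_mul x y v : tr (x * y) v = tr x (act y v) + eps x *: tr y v.
Proof.
rewrite /tri (act_mul hM) (eps_mul hH) scalerBr scalerA addrA.
by rewrite subrK.
Qed.

Lemma homlin (f : 'Hom(V, k^o)) c u w : f (c *: u + w) = c * f u + f w.
Proof. by rewrite linearP. Qed.

Lemma homDZ (f : 'Hom(V, k^o)) c u w : f (w + c *: u) = f w + c * f u.
Proof. by rewrite addrC homlin addrC. Qed.

Lemma hom0 (f : 'Hom(V, k^o)) : f 0 = 0.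
Proof. exact: linear0. Qed.

Definition mlin n (G : seq H -> k) :=
  forall l r, (size l + size r = n)%N -> lin (fun z => G (l ++ z :: r)).

Lemma size_iterD n x t : t \in iterD D n x -> size t = n.+1.
Proof.
elim: n x t => [|n IH] x t; first by rewrite inE => /eqP ->.
rewrite iterDS => /flattenP [ts /mapP [p _ ->]] /mapP [t' /IH h ->] /=.
by rewrite h.
Qed.

Lemma iterD_lin n G : mlin n G -> lin (fun x => \sum_(t <- iterD D n x) G t).
Proof.
elim: n G => [|n IH] G hG.
  by move=> c x y /=; rewrite !big_seq1; apply: (hG [::] [::]).
pose t a b := \sum_(u <- iterD D n b) G (a :: u).
have -> : (fun x => \sum_(u <- iterD D n.+1 x) G u) = (fun x => \sum_(p <- D x) t p.1 p.2).
  apply: functional_extensionality => x; rewrite iterDS big_flatten big_map /=.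
  by apply: eq_bigr => p _; rewrite big_map.
apply: D_lin => [b|a].
- move=> c x y; rewrite /t mulr_sumr -big_split /=; rewrite big_seq.
  rewrite [in RHS]big_seq; apply: eq_bigr => u hu.
  by apply: (hG [::] u); rewrite /= (size_iterD hu).
- apply: (IH (fun u => G (a :: u))) => l r hs; apply: (hG (a :: l) r).
  by rewrite /= addSn hs.
Qed.

Lemma nth_cat_ne (l r : seq H) (q q' : H) a : a != size l ->
  nth 0 (l ++ q :: r) a = nth 0 (l ++ q' :: r) a.
Proof.
move=> ha; rewrite !nth_cat; case: ltnP => // h.
by case E : (a - size l)%N => [|m] //; move: ha; rewrite eqn_leq h andbT -subn_eq0 E.
Qed.

Lemma nth_cat_eq (l r : seq H) (q : H) : nth 0 (l ++ q :: r) (size l) = q.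
Proof. by rewrite nth_cat ltnn subnn. Qed.

Lemma lift_ne_nat n (h : 'I_n) i : (lift h i : nat) != h.
Proof. by rewrite eq_sym; exact: (neq_lift h i). Qed.

Lemma Gdet n (v : 'I_n.+1 -> V) (f : 'I_n.+1 -> 'Hom(V, k^o)) :
  mlin n (fun t => wedge_pair (fun a => tr (nth 0 t a) (v a)) f).
Proof.
move=> l r hs c z y; rewrite /wedge_pair.
have hl : (size l < n.+1)%N by rewrite -hs ltnS leq_addr.
pose i0 := Ordinal hl.
rewrite (@determinant_multilinear _ _ _
  (\matrix_(a, b) f b (tr (nth 0 (l ++ z :: r) a) (v a)))
  (\matrix_(a, b) f b (tr (nth 0 (l ++ y :: r) a) (v a))) i0 c 1).
- by rewrite mul1r.
- apply/rowP => b; rewrite !mxE /= !nth_cat_eq tri_linh homlin.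
  by rewrite mul1r.
- apply/matrixP; move=> a b; rewrite !mxE.
  by rewrite (@nth_cat_ne l r _ (c *: z + y)) // lift_ne_nat.
- apply/matrixP; move=> a b; rewrite !mxE.
  by rewrite (@nth_cat_ne l r _ (c *: z + y)) // lift_ne_nat.
Qed.

Definition Lf n (v : 'I_n.+1 -> V) (f : 'I_n.+1 -> 'Hom(V, k^o)) (x : H) : k :=
  \sum_(t <- iterD D n x) wedge_pair (fun a => tr (nth 0 t a) (v a)) f.

Arguments Lf : clear implicits.

Lemma Lf_lin n v f : lin (Lf n v f).
Proof. exact: (iterD_lin (Gdet v f)). Qed.

Definition Kf n h := forall v f mu, lin mu ->
  \sum_(p <- D h) Lf n v f p.1 * mu p.2 = 0.

Lemma K_Kf n h : K D eps act n h -> Kf n h.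
Proof.
move=> [s [hs heq]] v f mu Lmu.
have := heq (fun a b => Lf n v f a * mu b).
rewrite /sw2 => ->; last by apply: mkbil => z; [apply: lin_mulr; apply: Lf_lin | apply: lin_mull].
by rewrite big_seq big1 // => p ps; rewrite /Lf (hs p ps v f) mul0r.
Qed.


Lemma lin_hom (f : 'Hom(V, k^o)) (g : H -> V) :
  (forall c x y, g (c *: x + y) = c *: g x + g y) -> lin (fun x => f (g x)).
Proof. by move=> hg c x y; rewrite hg homlin. Qed.

Fact FP_bil (v : V) (f : 'Hom(V, k^o)) : bilinear_form (fun x y => f (tr x (act y v))).
Proof.
apply: mkbil => z; apply: lin_hom => c x y; first exact: tri_linh.
by rewrite (act_linear_l hM) tri_linv.
Qed.
Definition FP v f := R2 (FP_bil v f).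

Fact FQ_bil (v : V) (f : 'Hom(V, k^o)) : bilinear_form (fun x y => eps x * f (tr y v)).
Proof.
apply: mkbil => z; first by apply: lin_mulr; exact: eps_lin.
by apply: lin_mull; apply: lin_hom => c x y; exact: tri_linh.
Qed.
Definition FQ v f := R2 (FQ_bil v f).

Fact F1_bil (v : V) (f : 'Hom(V, k^o)) : bilinear_form (fun x y => f (tr x v) * eps y).
Proof.
apply: mkbil => z; last by apply: lin_mull; exact: eps_lin.
by apply: lin_mulr; apply: lin_hom => c x y; exact: tri_linh.
Qed.
Definition F1 v f := R2 (F1_bil v f).

Fact ms_bil (F : r2) : bilinear_form (fun x y => F (x * y) 1).
Proof.
apply: mkbil => z c x y /=.
  by rewrite mulrDl -scalerAl; apply: (r2l F 1).
by rewrite mulrDr -scalerAr; apply: (r2l F 1).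
Qed.
Definition mstar F := R2 (ms_bil F).

Lemma mstar_zmod : zmod_morphism mstar.
Proof. by move=> F G; apply: r2_ext => x y. Qed.

Lemma mstar_monoid : monoid_morphism mstar.
Proof.
split.
  by apply: r2_ext => x y /=; rewrite (eps_mul hH) (eps_one hH) mulr1.
move=> F G; apply: r2_ext => x y /=.

transitivity (\sum_(r <- D (x * y)) F r.1 1 * G r.2 1).
  apply: eq_bigr => r _.
  by apply: (D_oneL (t := fun a b => F r.1 a * G r.2 b)) => ?; linauto.
rewrite (D_mulL x y (t := fun a b => F a 1 * G b 1)) //.
- by move=> ?; linauto.
- by move=> ?; linauto.
Qed.

HB.instance Definition _ := GRing.isZmodMorphism.Build r2 r2 mstar mstar_zmod.
HB.instance Definition _ := GRing.isMonoidMorphism.Build r2 r2 mstar mstar_monoid.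

Lemma det_scale_rows n (c : 'I_n -> k) (A : 'M[k]_n) :
  \det (\matrix_(a, b) (c a * A a b)) = (\prod_a c a) * \det A.
Proof.
have -> : \matrix_(a, b) (c a * A a b) = diag_mx (\row_a c a) *m A.
  by apply/matrixP => a b; rewrite mul_diag_mx !mxE.
by rewrite det_mulmx det_diag; congr (_ * _); apply: eq_bigr => a _; rewrite mxE.
Qed.

Lemma iter_eps n x : \sum_(s <- iterD D n x) \prod_(a < n.+1) eps (nth 0 s a) = eps x.
Proof.
elim: n x => [|n IH] x; first by rewrite big_seq1 big_ord1.
rewrite iterDS big_flatten big_map /=.
rewrite -[RHS](counitL x (phi := eps)); last exact: eps_lin.
apply: eq_bigr => p _; rewrite big_map -(IH p.2) big_distrr /=.
by apply: eq_bigr => t _; rewrite big_ord_recl.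
Qed.

Lemma xchg (I J : Type) (r1 : seq I) (r2 : seq J) (F : I -> J -> k) :
  \sum_(x <- r1) \sum_(y <- r2) F x y = \sum_(y <- r2) \sum_(x <- r1) F x y.
Proof. exact: exchange_big. Qed.

Section Prod.
Variables (g h : H).
Definition Zp (Psi : r2) := forall Theta : r2, (Psi * Theta) g h = 0.

Lemma Zp0 : Zp 0. Proof. by move=> T; rewrite mul0r. Qed.
Lemma ZpD a b : Zp a -> Zp b -> Zp (a + b).
Proof. by move=> ha hb T; rewrite mulrDl appD ha hb addr0. Qed.
Lemma ZpM a b : Zp b -> Zp (a * b).
Proof. by move=> hb T; rewrite [a * b]mulrC -mulrA hb. Qed.

Lemma baseP i : Kf i g -> forall (w : 'I_i.+1 -> V) (f : 'I_i.+1 -> 'Hom(V, k^o)),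
  Zp (\det (\matrix_(a, b) FP (w a) (f b))).
Proof.
move=> hg w f T; rewrite appM.
under eq_bigr => p _ do under eq_bigr => q _ do rewrite app_det.
transitivity (\sum_(q <- D h) \sum_(u <- iterD D i q.1)
   \sum_(p <- D g) Lf i (fun a => act (nth 0 u a) (w a)) f p.1 * T p.2 q.2).
  rewrite exchange_big /=; apply: eq_bigr => q _.
  rewrite [RHS]exchange_big /=; apply: eq_bigr => p _.
  rewrite (xchg (iterD D i p.1)) big_distrl /=; apply: eq_bigr => u _.
  rewrite /Lf [LHS]big_distrl [RHS]big_distrl /=; apply: eq_bigr => s _; congr (_ * _).
  rewrite /wedge_pair; congr (\det _); apply/matrixP; move=> a b; by rewrite !mxE.
rewrite big1 // => q _; rewrite big1 // => u _; apply: (hg _ _ (fun y => T y q.2)).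
exact: (r2l T).
Qed.

Lemma baseQ j : Kf j h -> forall (w : 'I_j.+1 -> V) (f : 'I_j.+1 -> 'Hom(V, k^o)),
  Zp (\det (\matrix_(a, b) FQ (w a) (f b))).
Proof.
move=> hh w f T.
have E x y : (\det (\matrix_(a, b) FQ (w a) (f b))) x y = eps x * Lf j w f y.
  rewrite app_det -(iter_eps j x) big_distrl /=; apply: eq_bigr => s _.
  rewrite /Lf big_distrr /=; apply: eq_bigr => u _.
  rewrite -det_scale_rows /wedge_pair; congr (\det _); apply/matrixP; move=> a b.
  by rewrite !mxE.
rewrite appM.
transitivity (\sum_(q <- D h) Lf j w f q.1 * T g q.2).
  rewrite exchange_big /=; apply: eq_bigr => q _.
  rewrite -(counitL g (phi := fun x => T x q.2)); last exact: (r2l T).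
  rewrite big_distrr /=; apply: eq_bigr => p _; rewrite E.
  by rewrite mulrCA !mulrA.
by apply: hh; exact: (r2r T).
Qed.
End Prod.


Fact mu_bil mu : lin mu -> bilinear_form (fun x y => mu (x * y)).
Proof.
move=> Lmu; apply: mkbil => z c x y /=.
  by rewrite mulrDl -scalerAl Lmu.
by rewrite mulrDr -scalerAr Lmu.
Qed.

Lemma Kf_mul i j g h : Kf i g -> Kf j h -> Kf (i + j) (g * h).
Proof.
move=> hg hh v f mu Lmu.
pose Theta := R2 (mu_bil Lmu).
pose Psi : r2 := \det (mkM FP FQ (fun _ => None) v f).
have ZPsi : Zp g h Psi.
  rewrite /Psi; apply: (detC (@Zp0 g h) (@ZpD g h) (@ZpM g h) (@baseP g h i hg) (@baseQ g h j hh)).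
  by rewrite addn1.
have EPsi x y : Psi x y = Lf (i + j) v f (x * y).
  have -> : Psi = mstar (\det (\matrix_(a, b) F1 (v a) (f b))).
    rewrite -det_map_mx; congr (\det _); apply/matrixP; move=> a b; rewrite !mxE.
    apply: r2_ext => x' y' /=.
    by rewrite (eps_one hH) mulr1 tri_mul homDZ.
  rewrite /= app_det /Lf; apply: eq_bigr => s _.
  rewrite -[RHS]mulr1 -(eps_one hH) -(iter_eps (i + j) 1) big_distrr /=.
  apply: eq_bigr => u _; rewrite mulrC -det_scale_rows /wedge_pair.
  by congr (\det _); apply/matrixP; move=> a b; rewrite !mxE mulrC.
rewrite (D_mulL g h (t := fun a b => Lf (i + j) v f a * mu b)); last 2 first.
- by move=> b; apply: lin_mulr; exact: Lf_lin.
- by move=> a; apply: lin_mull.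
transitivity ((Psi * Theta) g h); last exact: ZPsi.
rewrite appM; apply: eq_bigr => p _; apply: eq_bigr => q _.
by rewrite EPsi.
Qed.


Definition Good (ls : seq (H -> k)) (lam : H -> k) :=
  forall (s : seq (H * H)) mu, lin mu ->
  (forall l, List.In l ls -> \sum_(p <- s) l p.1 * mu p.2 = 0) ->
  \sum_(p <- s) lam p.1 * mu p.2 = 0.

Lemma Good_in ls l : List.In l ls -> Good ls l.
Proof. by move=> hl s mu _ h; apply: h. Qed.

Lemma Good_mono l ls f : Good ls f -> Good (l :: ls) f.
Proof. by move=> hf s mu Lmu h; apply: hf => // l' hl'; apply: h; right. Qed.

Lemma Good_lc ls f g c : Good ls f -> Good ls g -> Good ls (fun x => (f x - g x) * c).
Proof.
move=> hf hg s mu Lmu h.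
under eq_bigr => p _ do rewrite mulrBl mulrBl mulrAC [g _ * c * _]mulrAC.
by rewrite sumrB -!big_distrl /= hf // hg // !mul0r subrr.
Qed.

Lemma Good_add ls f g : Good ls f -> Good ls g -> Good ls (fun x => f x + g x).
Proof.
move=> hf hg s mu Lmu h.
under eq_bigr => p _ do rewrite mulrDl.
by rewrite big_split /= hf // hg // addr0.
Qed.

Lemma Good_sum ls I (r : seq I) (F : I -> H -> k) :
  (forall e, List.In e r -> Good ls (F e)) -> Good ls (fun x => \sum_(e <- r) F e x).
Proof.
elim: r => [|e r IH] hF.
  by move=> s mu _ _; rewrite big1 // => p _; rewrite big_nil mul0r.
have -> : (fun x => \sum_(e0 <- e :: r) F e0 x) = (fun x => F e x + \sum_(e0 <- r) F e0 x).
  by apply: functional_extensionality => x; rewrite big_cons.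
apply: Good_add; first by apply: hF; left.
by apply: IH => e' he'; apply: hF; right.
Qed.


Lemma Good_mulc ls f c : Good ls f -> Good ls (fun x => f x * c).
Proof.
move=> hf s mu Lmu h.
under eq_bigr => p _ do rewrite mulrAC.
by rewrite -big_distrl /= hf // mul0r.
Qed.

Lemma proj (ls : seq (H -> k)) : (forall l, List.In l ls -> lin l) ->
  exists es : seq (H * (H -> k)), (forall e, List.In e es -> Good ls e.2) /\
    (forall l, List.In l ls -> forall x, l x = \sum_(e <- es) e.2 x * l e.1).
Proof.
elim: ls => [|l ls IH] hlin; first by exists [::].
have [es [hg hr]] := IH (fun l' h => hlin l' (or_intror h)).
have Ll : lin l by apply: hlin; left.
pose l' x := l x - \sum_(e <- es) e.2 x * l e.1.
have Gl' : Good (l :: ls) (fun x => (l x - \sum_(e <- es) e.2 x * l e.1) * 1).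
  apply: Good_lc; first by apply: Good_in; left.
  apply: Good_sum => e he; apply: Good_mulc; apply: Good_mono; exact: hg.
case: (classic (exists x0, l' x0 != 0)) => [[x0 hx0] | hno]; last first.
  exists es; split; first by move=> e he; apply: Good_mono; apply: hg.
  move=> l'' [<- | hl''] x; last exact: hr.
  have : l' x = 0 by case: (eqVneq (l' x) 0) => // hne; exfalso; apply: hno; exists x.
  by move/eqP; rewrite subr_eq0 => /eqP.
pose x1 := x0 - \sum_(e <- es) e.2 x0 *: e.1.
pose lam x := (l x - \sum_(e <- es) e.2 x * l e.1) * (l' x0)^-1.
have hx1 l'' : lin l'' -> l'' x1 = l'' x0 - \sum_(e <- es) e.2 x0 * l'' e.1.
  move=> L; rewrite /x1 linB // lin_sum //; congr (_ - _).
  by apply: eq_bigr => e _; rewrite linZ.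
exists ((x1, lam) :: es); split.
  move=> e [<- | he] /=; last by apply: Good_mono; apply: hg.
  apply: Good_lc; first by apply: Good_in; left.
  apply: Good_sum => e' he'; apply: Good_mulc; apply: Good_mono; exact: hg.
move=> l'' [<- | hl''] x; rewrite big_cons /=.
  rewrite hx1 // -/(l' x0) /lam -/(l' x) divfK //.
  by rewrite /l' subrK.
rewrite hx1; last by apply: hlin; right.
by rewrite -hr // subrr mulr0 add0r -hr.
Qed.


Lemma Lf_linv n (f : 'I_n.+1 -> 'Hom(V, k^o)) z w a c x y :
  Lf n (upd w a (c *: x + y)) f z = c * Lf n (upd w a x) f z + Lf n (upd w a y) f z.
Proof.
rewrite /Lf mulr_sumr -big_split; apply: eq_bigr => t _ /=; rewrite /wedge_pair.
rewrite (@determinant_multilinear _ _ _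
  (\matrix_(a', b) f b (tr (nth 0 t a') (upd w a x a')))
  (\matrix_(a', b) f b (tr (nth 0 t a') (upd w a y a'))) a c 1) ?mul1r //.
- by apply/rowP => b; rewrite !mxE /upd eqxx tri_linv homlin mul1r.
- by apply/matrixP; move=> a' b; rewrite !mxE /upd liftF.
- by apply/matrixP; move=> a' b; rewrite !mxE /upd liftF.
Qed.

Lemma Lf_linf n (w : 'I_n.+1 -> V) z f a c g1 g2 :
  Lf n w (upd f a (c *: g1 + g2)) z = c * Lf n w (upd f a g1) z + Lf n w (upd f a g2) z.
Proof.
rewrite /Lf mulr_sumr -big_split; apply: eq_bigr => t _ /=; rewrite /wedge_pair.
set A := \matrix_(a', b) upd f a (c *: g1 + g2) b (tr (nth 0 t a') (w a')).
set B := \matrix_(a', b) upd f a g1 b (tr (nth 0 t a') (w a')).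
set C := \matrix_(a', b) upd f a g2 b (tr (nth 0 t a') (w a')).
rewrite -(det_tr A) -(det_tr B) -(det_tr C).
rewrite (@determinant_multilinear _ _ A^T B^T C^T a c 1) ?mul1r //.
- apply/rowP => b; by rewrite !mxE /upd eqxx add_lfunE scale_lfunE mul1r.
- by apply/matrixP; move=> a' b; rewrite !mxE /upd liftF.
- by apply/matrixP; move=> a' b; rewrite !mxE /upd liftF.
Qed.



Lemma In_map_inv (I : Type) (F : I -> H -> k) (r : seq I) l :
  List.In l (map F r) -> exists i, l = F i.
Proof.
elim: r => [|i r IH] //= [<- | h]; first by exists i.
exact: IH.
Qed.

Lemma In_map_mem (I : eqType) (F : I -> H -> k) (r : seq I) i :
  i \in r -> List.In (F i) (map F r).
Proof.
elim: r => [|j r IH] //=; rewrite inE => /orP [/eqP -> | h]; first by left.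
by right; exact: IH.
Qed.

Lemma sum0_In (I : Type) (r : seq I) (F : I -> k) :
  (forall e, List.In e r -> F e = 0) -> \sum_(e <- r) F e = 0.
Proof.
elim: r => [|e r IH] h; first by rewrite big_nil.
by rewrite big_cons h ?IH ?addr0 //; [move=> e' he'; apply: h; right | left].
Qed.

Lemma Kf_K n h : Kf n h -> K D eps act n h.
Proof.
move=> hK.
pose BV := vbasis (fullv : {vspace V}).
pose BF := vbasis (fullv : {vspace 'Hom(V, k^o)}).
pose Lc (c : ({ffun 'I_n.+1 -> 'I_(\dim (fullv : {vspace V}))} *
             {ffun 'I_n.+1 -> 'I_(\dim (fullv : {vspace 'Hom(V, k^o)}))})%type) := Lf n (fun a => BV`_(c.1 a)) (fun a => BF`_(c.2 a)).
pose ls := map Lc (enum (predT : pred ({ffun 'I_n.+1 -> 'I_(\dim (fullv : {vspace V}))} *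
             {ffun 'I_n.+1 -> 'I_(\dim (fullv : {vspace 'Hom(V, k^o)}))})%type)).
have [es [hg hr]] : exists es : seq (H * (H -> k)), (forall e, List.In e es -> Good ls e.2) /\
    (forall l, List.In l ls -> forall x, l x = \sum_(e <- es) e.2 x * l e.1).
  apply: proj => l /In_map_inv [c ->]; exact: Lf_lin.
pose pr x := x - \sum_(e <- es) e.2 x *: e.1.
exists [seq (pr p.1, p.2) | p <- D h]; split.
  move=> p /mapP [q _ ->] /=.
  have zb c : Lc c (pr q.1) = 0.
    have hc : List.In (Lc c) ls by apply: In_map_mem; rewrite mem_enum.
    rewrite /pr linB; last exact: Lf_lin.
    rewrite lin_sum; last exact: Lf_lin.
    rewrite [Lc c q.1](hr _ hc); apply/eqP; rewrite subr_eq0; apply/eqP; apply: eq_bigr => e _.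
    by rewrite linZ //; exact: Lf_lin.
  move=> v f.
  change (Lf n v f (pr q.1) = 0).
  apply: (ML (G := fun f' => Lf n v f' (pr q.1))) => [w a c x y | cf]; first exact: Lf_linf.
  apply: (ML (G := fun v' => Lf n v' _ (pr q.1))) => [w a c x y | cv]; first exact: Lf_linv.
  have := zb ([ffun a => cv a], [ffun a => cf a]); rewrite /Lc /=.
  have -> : (fun a => BV`_([ffun a => cv a] a)) = (fun a => BV`_(cv a)).
    by apply: functional_extensionality => a; rewrite ffunE.
  have -> : (fun a => BF`_([ffun a => cf a] a)) = (fun a => BF`_(cf a)).
    by apply: functional_extensionality => a; rewrite ffunE.
  by [].
move=> b hb; rewrite /sw2 big_map /=.
have [Lb1 Lb2] := (bilP b).1 hb.
have E p : b (pr p.1) p.2 = b p.1 p.2 - \sum_(e <- es) e.2 p.1 * b e.1 p.2.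
  rewrite /pr; move: (linB (Lb1 p.2)) (lin_sum es (fun e => e.2 p.1 *: e.1) (Lb1 p.2)) (linZ (Lb1 p.2)) => /= -> -> hZ.
  by congr (_ - _); apply: eq_bigr => e _; rewrite hZ.
under [RHS]eq_bigr => p _ do rewrite E.
rewrite sumrB exchange_big /= (sum0_In (r := es)) ?subr0 // => e he.
apply: (hg e he) => // l /In_map_inv [c ->].
exact: hK.
Qed.




Lemma Kf11 : Kf 1 1.
Proof.
move=> v f mu Lmu.
rewrite (D_oneL (t := fun a b => Lf 1 v f a * mu b)); last 2 first.
- by move=> b; apply: lin_mulr; exact: Lf_lin.
- by move=> a; apply: lin_mull.
suff -> : Lf 1 v f 1 = 0 by rewrite mul0r.
pose G := fun t => wedge_pair (fun a => tr (nth 0 t a) (v a)) f.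
have hG := Gdet v f.
rewrite /Lf iterDS big_flatten big_map /=.
under eq_bigr => p _ do rewrite big_seq1.
rewrite (D_oneL (t := fun a b => G [:: a; b])); last 2 first.
- by move=> b; apply: (hG [::] [:: b]).
- by move=> a; apply: (hG [:: a] [::]).
rewrite /G /wedge_pair.
have -> : (\matrix_(a, b) f b (tr (nth 0 [:: (1 : H); 1] a) (v a))) = 0.
  apply/matrixP => a b; rewrite !mxE.
  have -> : nth 0 [:: (1 : H); 1] a = 1 by case: a => [[|[|]]].
  by rewrite tri1 hom0.
exact: det0.
Qed.

Lemma main_in :
  (forall (i : nat) (h : H), K D eps act i h -> K D eps act i.+1 h) /\
  (forall (i j : nat) (g h : H),
      K D eps act i g -> K D eps act j h -> K D eps act (i + j) (g * h)).
Proof.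
have hmul i j g h : K D eps act i g -> K D eps act j h -> K D eps act (i + j) (g * h).
  by move=> hg hh; apply: Kf_K; apply: Kf_mul; apply: K_Kf.
split => // i h hh.
have := hmul i 1%N h 1 hh (Kf_K Kf11).
by rewrite mulr1 addn1.
Qed.

End Main.

Theorem mainTheorem13 (k : fieldType) (H : algType k) (V : vectType k)
    (D : H -> seq (H * H)) (eps : H -> k) (S : H -> H) (act : H -> V -> V) :
  [pchar k] =i pred0 ->
  is_hopf D eps S ->
  cocommutative D ->
  is_module act ->
  (forall (i : nat) (h : H), K D eps act i h -> K D eps act i.+1 h) /\
  (forall (i j : nat) (g h : H),
      K D eps act i g -> K D eps act j h -> K D eps act (i + j) (g * h)).
Proof.
move=> _ hH hC hM; exact: (main_in hH hC hM).
Qed.
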